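(* The monoid $\mathrm{lps}$ and the monoids $\mathrm{lps}_n$ for $n\geq2$ do not satisfy any non-trivial identity.
   Context: Let $\mathcal{A}=\{1<2<3<\cdots\}$ and $\mathcal{A}_n=\{1<2<\cdots<n\}$. An lPS tableau is a finite (possibly empty) sequence of nonempty bottom-justified columns of boxes filled with positive integers, such that the entries of each column are strictly decreasing from top to bottom and the bottom entries of the columns form a weakly increasing sequence from left to right. Right insertion of a symbol $a$ into an lPS tableau $B$: if $a$ is greater than or equal to every entry of the bottom row, append a new column consisting of $a$ at the right end; otherwise, let $z$ be the leftmost bottom-row entry with $z>a$ and put $a$ in a new box at the bottom of the column of $z$ (the previous entries of that column move up one box). For $w=w_1\cdots w_k$, $\mathfrak{R}_\ell(w)$ is obtained by starting with the empty tableau and right-inserting $w_1,\dots,w_k$ in order. The monoid $\mathrm{lps}$ (resp. $\mathrm{lps}_n$) is the quotient of $\mathcal{A}^*$ (resp. $\mathcal{A}_n^*$) by the congruence $u\equiv v\iff\mathfrak{R}_\ell(u)=\mathfrak{R}_\ell(v)$. An identity is a formal equality $u=v$ of words over a countable alphabet $\Sigma$ of variables; it is non-trivial if $u\neq v$ as words; a monoid $M$ satisfies it if $f(u)=f(v)$ for every monoid morphism $f:\Sigma^*\to M$. *)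

(* Defs.v *)
From mathcomp Require Import all_boot.
Set Implicit Arguments. Unset Strict Implicit. Unset Printing Implicit Defensive.

(* An lPS tableau is a sequence of columns (left to right); each column is
   stored BOTTOM-FIRST, i.e. as the list of its entries read from the bottom
   box upwards.  Letters of the alphabet A = {1<2<3<...} are positive nats. *)
Definition column := seq nat.
Definition tableau := seq column.

Fixpoint rinsert (a : nat) (B : tableau) : tableau :=
  match B with
  | [::] => [:: [:: a]]
  | c :: B' => if a < head 0 c then (a :: c) :: B' else c :: rinsert a B'
  end.

Definition Rl (w : seq nat) : tableau := foldl (fun B a => rinsert a B) [::] w.

Definition wordA (w : seq nat) : bool := all (fun a => 0 < a) w.
Definition wordAn (n : nat) (w : seq nat) : bool := all (fun a => 0 < a <= n) w.

(* Variables of Sigma are indexed by nat; identities are pairs of words over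
   Sigma.  A monoid morphism Sigma^* -> A^*/== is determined by the images of
   the variables, each being the class of some word; so f(u) is the class of
   the word obtained by substituting. *)
Definition subst (s : nat -> seq nat) (u : seq nat) : seq nat :=
  flatten (map s u).

Definition lps_satisfies (u v : seq nat) : Prop :=
  forall s : nat -> seq nat, (forall x, wordA (s x)) ->
    Rl (subst s u) = Rl (subst s v).

Definition lpsn_satisfies (n : nat) (u v : seq nat) : Prop :=
  forall s : nat -> seq nat, (forall x, wordAn n (s x)) ->
    Rl (subst s u) = Rl (subst s v).

(* Main.v *)
Require Import Defs.
From mathcomp Require Import all_boot.

Definition good (T : tableau) : bool := all (fun c => head 0 c <= 1) T.

Lemma r1 T : good T -> rinsert 1 T = rcons T [:: 1].
Proof. elim: T => //= c T IH /andP[hc hT]; by rewrite ltnNge hc IH. Qed.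

Lemma r2 T : good T -> rinsert 2 T = rcons T [:: 2].
Proof.
elim: T => //= c T IH /andP[hc hT]; rewrite IH //.
by have -> : (2 < head 0 c) = false by apply/negbTE; rewrite -leqNgt (leq_trans hc).
Qed.

Lemma r12 T : good T -> rinsert 1 (rcons T [:: 2]) = rcons T [:: 1; 2].
Proof. elim: T => //= c T IH /andP[hc hT]; by rewrite ltnNge hc IH. Qed.

Lemma good_rcons T c : good T -> head 0 c <= 1 -> good (rcons T c).
Proof. by move=> hT hc; rewrite /good all_rcons hc. Qed.

Definition sw (z : nat) : seq nat := 1 :: flatten (nseq z [:: 2; 1]).
Definition code (z : nat) : tableau := [:: 1] :: nseq z [:: 1; 2].

Definition ins := (fun B a => rinsert a B).

Lemma ins_pairs z T : good T ->
  foldl ins T (flatten (nseq z [:: 2; 1])) = T ++ nseq z [:: 1; 2].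
Proof.
elim: z T => [|z IH] T hT /=; first by rewrite cats0.
rewrite /ins r2 // r12 // IH; last exact: good_rcons.
by rewrite cat_rcons.
Qed.

Lemma good_cat T U : good T -> good U -> good (T ++ U).
Proof. by rewrite /good all_cat => -> ->. Qed.

Lemma good_code z : good (code z).
Proof. by rewrite /= ; elim: z. Qed.

Lemma ins_sw z T : good T -> foldl ins T (sw z) = T ++ code z.
Proof.
move=> hT; rewrite /sw /=; have -> : ins T 1 = rcons T [:: 1] by exact: r1.
rewrite ins_pairs; last exact: good_rcons.
by rewrite cat_rcons.
Qed.

Lemma ins_word u T : good T ->
  foldl ins T (subst sw u) = T ++ flatten (map code u).
Proof.
elim: u T => [|z u IH] T hT; first by rewrite /= cats0.
have -> : subst sw (z :: u) = sw z ++ subst sw u by [].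
rewrite foldl_cat ins_sw // IH.
  by rewrite catA.
by apply: good_cat => //; apply: good_code.
Qed.

Lemma Rl_sw u : Rl (subst sw u) = flatten (map code u).
Proof. by rewrite /Rl -/ins ins_word. Qed.

Lemma headF u : flatten (map code u) = [::] \/ exists r, flatten (map code u) = [:: 1] :: r.
Proof. case: u => [|z u]; [by left | right; by eexists]. Qed.

Lemma nseq_cancel a b u v :
  nseq a [:: 1; 2] ++ flatten (map code u) = nseq b [:: 1; 2] ++ flatten (map code v) ->
  a = b /\ flatten (map code u) = flatten (map code v).
Proof.
elim: a b => [|a IH] [|b] //=.
- by case: (headF u) => [->|[r ->]].
- by case: (headF v) => [->|[r ->]].
- by case=> /IH [-> ->].
Qed.

Lemma code_inj u v : flatten (map code u) = flatten (map code v) -> u = v.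
Proof.
elim: u v => [|z u IH] [|z' v] //= [] /nseq_cancel [-> /IH ->] //.
Qed.

Lemma sw_ok n z : 2 <= n -> wordAn n (sw z).
Proof.
move=> hn; rewrite /wordAn /= (leq_trans _ hn) //=.
by elim: z => //= z ->; rewrite hn (leq_trans _ hn).
Qed.

Lemma sw_okA z : wordA (sw z).
Proof. by rewrite /wordA /=; elim: z. Qed.

Theorem corollary4p4 :
  (forall u v : seq nat, u <> v -> ~ lps_satisfies u v) /\
  (forall n : nat, 2 <= n -> forall u v : seq nat, u <> v -> ~ lpsn_satisfies n u v).
Proof.
split.
- move=> u v huv H; apply: huv; apply: code_inj.
  by rewrite -!Rl_sw; apply: H; apply: sw_okA.
- move=> n hn u v huv H; apply: huv; apply: code_inj.
  by rewrite -!Rl_sw; apply: H => x; apply: sw_ok.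
Qed.
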